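(* Let $A$ be a meet-complemented lattice in which $\Box x$ and $\Diamond x$ exist for every $x\in A$, and let $a,b\in A$. Then (i) $\neg\neg a\le\Box\Diamond a$; (ii) $\Box a\le\Box\Diamond a$; (B1) $a\le\Box\Diamond a$; (B2) $\Diamond\Box a\le a$; (A) $\Diamond a\le b$ if and only if $a\le\Box b$; (iii) $\Diamond\Box\Diamond a=\Diamond a$ and $\Box\Diamond\Box a=\Box a$.
   Context: A meet-complemented lattice is a lattice $(L,\le)$ (not necessarily distributive) such that for every $a\in L$ the element $\neg a=\max\{b\in L: a\wedge b\le c\ \text{for all } c\in L\}$ exists; it is bounded with bottom $0$ and top $1$. For $a\in L$, $\Box a=\max\{b\in L: a\vee\neg b=1\}$ and $\Diamond a=\min\{b\in L: \neg a\vee b=1\}$. *)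

(* Defs.v *)
From HB Require Import structures.
From mathcomp Require Import all_boot all_order.
Set Implicit Arguments. Unset Strict Implicit. Unset Printing Implicit Defensive.
Import Order.TTheory.
Local Open Scope order_scope.

Definition is_max d (T : porderType d) (P : T -> Prop) (m : T) : Prop :=
  P m /\ forall b, P b -> b <= m.
Definition is_min d (T : porderType d) (P : T -> Prop) (m : T) : Prop :=
  P m /\ forall b, P b -> m <= b.

Definition meet_complement d (T : tbLatticeType d) (neg : T -> T) : Prop :=
  forall a : T, is_max (fun b => forall c : T, a `&` b <= c) (neg a).

Definition is_box d (T : tbLatticeType d) (neg box : T -> T) : Prop :=
  forall a : T, is_max (fun b => a `|` neg b = \top) (box a).

Definition is_dia d (T : tbLatticeType d) (neg dia : T -> T) : Prop :=
  forall a : T, is_min (fun b => neg a `|` b = \top) (dia a).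

(* Main.v *)
Require Import Defs.
From HB Require Import structures.
From mathcomp Require Import all_boot all_order.
Import Order.TTheory.
Local Open Scope order_scope.
Set Implicit Arguments. Unset Strict Implicit.

Section Aux.
Variables (d : Order.disp_t) (A : tbLatticeType d) (neg box dia : A -> A).
Hypotheses (Hneg : meet_complement neg) (Hbox : is_box neg box) (Hdia : is_dia neg dia).

Lemma negP (x y : A) : (x `&` y <= \bot) <-> (y <= neg x).
Proof.
split.
- move=> H; apply: (proj2 (Hneg x)) => c; exact: le_trans H (le0x _).
- move=> H; apply: le_trans (proj1 (Hneg x) \bot).
  by rewrite lexI leIl /= (le_trans (leIr _ _) H).
Qed.

Lemma nn (x : A) : x <= neg (neg x).
Proof. by apply/negP; rewrite meetC; apply/negP. Qed.

Lemma anti (x y : A) : x <= y -> neg y <= neg x.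
Proof.
move=> H; apply/negP; apply: le_trans (proj1 (Hneg y) \bot).
by rewrite lexI leIr /= (le_trans (leIl _ _) H).
Qed.

Lemma jtop (u v w : A) : u <= v -> u `|` w = \top -> v `|` w = \top.
Proof.
move=> H E; apply/le_anti; rewrite lex1 /= -E.
by rewrite leUx leUr andbT (le_trans H (leUl _ _)).
Qed.

Lemma GA (x y : A) : dia x <= y <-> x <= box y.
Proof.
split.
- move=> H; apply: (proj2 (Hbox y)); cbv beta.
  apply: jtop H _; rewrite joinC; exact: (proj1 (Hdia x)).
- move=> H; apply: (proj2 (Hdia x)); cbv beta.
  apply: jtop (anti H) _; rewrite joinC; exact: (proj1 (Hbox y)).
Qed.

Lemma boxnn (x : A) : box x <= neg (neg x).
Proof.
apply/negP.
set z := neg x `&` box x.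
have Hz1 : neg (neg x) <= neg z by apply: anti; exact: leIl.
have Hz2 : neg (box x) <= neg z by apply: anti; exact: leIr.
have T : neg z = \top.
  apply/le_anti; rewrite lex1 /= -(proj1 (Hbox x)).
  by rewrite leUx Hz2 andbT (le_trans (nn x) Hz1).
have := proj1 (Hneg z) \bot; by rewrite T meetx1.
Qed.

Lemma dia_mono (x y : A) : x <= y -> dia x <= dia y.
Proof. move=> H; apply/GA; apply: le_trans H _; apply/GA; exact: lexx. Qed.

Lemma box_mono (x y : A) : x <= y -> box x <= box y.
Proof. move=> H; apply/GA; apply: le_trans H; apply/GA; exact: lexx. Qed.

End Aux.

Theorem lemma14 (d : Order.disp_t) (A : tbLatticeType d) (neg box dia : A -> A)
  (Hneg : meet_complement neg) (Hbox : is_box neg box) (Hdia : is_dia neg dia)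
  (a b : A) :
  [/\ neg (neg a) <= box (dia a),
      box a <= box (dia a),
      a <= box (dia a),
      dia (box a) <= a
    & [/\ (dia a <= b <-> a <= box b),
           dia (box (dia a)) = dia a
         & box (dia (box a)) = box a]].
Proof.
have B1 : forall x, x <= box (dia x) by move=> x; apply/(GA Hneg Hbox Hdia).
have B2 : forall x, dia (box x) <= x by move=> x; apply/(GA Hneg Hbox Hdia).
split.
- apply/(GA Hneg Hbox Hdia); apply: (proj2 (Hdia _)); cbv beta.
  exact: jtop (nn Hneg _) (proj1 (Hdia a)).
- apply/(GA Hneg Hbox Hdia); apply: (proj2 (Hdia _)); cbv beta.
  apply: jtop _ (proj1 (Hdia a)).
  exact: le_trans (nn Hneg (neg a)) (anti Hneg (boxnn Hneg Hbox a)).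
- exact: B1.
- exact: B2.
- split.
  + exact: (@GA d A neg box dia Hneg Hbox Hdia a b).
  + apply/le_anti; rewrite B2 /=; apply: dia_mono Hneg Hbox Hdia _ _ (B1 a).
  + apply/le_anti; rewrite B1 andbT; apply: box_mono Hneg Hbox Hdia _ _ (B2 a).
Qed.
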